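(* Let $(X,d_X)$ be a compact metric space, let $0<\gamma<1$, let $(\phi_j)_{j\in\mathbb{N}}$ be maps $\phi_j:X\to X$ with $d_X(\phi_j(x_1),\phi_j(x_2))\le \gamma\, d_X(x_1,x_2)$ for all $j$ and $x_1,x_2\in X$, and let $(q_j)_{j\in\mathbb{N}}$ be real numbers with $q_j\le 0$ and $\sup_j q_j=0$. Let $\nu\in I(X)$ be the unique idempotent probability with $M_{\phi,q}(\nu)=\nu$, where $M_{\phi,q}(\mu)(f):=\sup_{j\in\mathbb{N}}(q_j+\mu(f\circ\phi_j))$. For each $n\in\mathbb{N}$ let $\alpha_n:=\max_{1\le j\le n} q_j$, $\tilde q_j:=q_j-\alpha_n$ for $1\le j\le n$, $M_{\phi,\tilde q,n}(\mu)(f):=\max_{1\le j\le n}(\tilde q_j+\mu(f\circ\phi_j))$, and let $\mu_n\in I(X)$ be the unique idempotent probability with $M_{\phi,\tilde q,n}(\mu_n)=\mu_n$. Let $(\mu_{n_i})_{i\in\mathbb{N}}$ be any subsequence that converges in the topology $\tau_p$. Then $\mu_{n_i}\to\nu$ in $\tau_p$; in particular the sequence $(\mu_n)$ converges in the $\tau_p$ topology (to $\nu$).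
   Context: $C(X,\mathbb{R})$ is the set of continuous real functions on $X$. $I(X)$ is the set of functionals $m:C(X,\mathbb{R})\to\mathbb{R}$ with $m(a+f)=a+m(f)$ for $a\in\mathbb{R}$, $m(\max(f,g))=\max(m(f),m(g))$, and $m(0)=0$. The topology $\tau_p$ on $I(X)$ is that of pointwise convergence: $\mu_k\to\mu$ iff $\mu_k(f)\to\mu(f)$ for every $f\in C(X,\mathbb{R})$. The existence and uniqueness of $\nu$ and of each $\mu_n$ (fixed points of the respective contractive operators) are part of the setting. *)

(* Defs.v *)
From HB Require Import structures.
From mathcomp Require Import all_boot all_order all_algebra.
From mathcomp Require Import all_classical all_reals all_analysis.
Set Implicit Arguments. Unset Strict Implicit. Unset Printing Implicit Defensive.
Import Order.TTheory GRing.Theory Num.Theory.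
Import numFieldTopology.Exports.
Local Open Scope classical_set_scope.
Local Open Scope ring_scope.

(* Idempotent probabilities (Maslov measures) on X: functionals on C(X,R),
   represented as maps (X -> R) -> R whose behaviour only matters on
   continuous functions. *)
Definition idem_prob {R : realType} {X : topologicalType}
  (m : (X -> R) -> R) : Prop :=
  [/\ (forall (a : R) (f : X -> R), continuous f -> m (fun x => a + f x) = a + m f),
      (forall f g : X -> R, continuous f -> continuous g ->
          m (fun x => Num.max (f x) (g x)) = Num.max (m f) (m g))
    & m (fun _ => 0) = 0].

Definition eq_on_C {R : realType} {X : topologicalType}
  (m1 m2 : (X -> R) -> R) : Prop :=
  forall f : X -> R, continuous f -> m1 f = m2 f.

Definition tau_p_cvg {R : realType} {X : topologicalType}
  (u : nat -> (X -> R) -> R) (m : (X -> R) -> R) : Prop :=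
  forall f : X -> R, continuous f -> (fun k => u k f) @ \oo --> m f.

Definition M_op {R : realType} {X : topologicalType}
  (phi : nat -> X -> X) (q : nat -> R) (mu : (X -> R) -> R) : (X -> R) -> R :=
  fun f => sup [set q j + mu (f \o phi j) | j in [set: nat]].

(* alpha_n = max_{j <= n} q_j  (0-based indices: the first n.+1 maps) *)
Definition alpha {R : realType} (q : nat -> R) (n : nat) : R :=
  \big[Num.max/q 0%N]_(j < n.+1) q j.

Definition M_op_n {R : realType} {X : topologicalType}
  (phi : nat -> X -> X) (q : nat -> R) (n : nat) (mu : (X -> R) -> R)
  : (X -> R) -> R :=
  fun f => \big[Num.max/(q 0%N - alpha q n + mu (f \o phi 0%N))]_(j < n.+1)
             (q j - alpha q n + mu (f \o phi j)).

(* Main.v *)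
Require Import Defs.
From HB Require Import structures.
From mathcomp Require Import all_boot all_order all_algebra.
From mathcomp Require Import all_classical all_reals all_analysis.
From mathcomp Require Import lra.
Import Order.TTheory GRing.Theory Num.Theory.
Import numFieldTopology.Exports.
Local Open Scope classical_set_scope.
Local Open Scope ring_scope.

Section Gen.
Variable R : realType.

Lemma bm_ub (F : nat -> R) (n j : nat) : (j <= n)%N ->
  F j <= \big[Num.max/F 0%N]_(i < n.+1) F i.
Proof.
move=> hj; have hj' : (j < n.+1)%N by [].
exact: (le_bigmax (F 0%N) (fun i : 'I_n.+1 => F i) (Ordinal hj')).
Qed.

Lemma bm_le (F : nat -> R) (n : nat) (c : R) : (forall j, (j <= n)%N -> F j <= c) ->
  \big[Num.max/F 0%N]_(i < n.+1) F i <= c.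
Proof.
move=> h; apply: bigmax_le => [|i _]; first exact: h.
by apply: h; rewrite -ltnS.
Qed.

Variable X : topologicalType.
Variable m : (X -> R) -> R.
Hypothesis mI : idem_prob m.

Lemma idem_cst a : m (fun _ => a) = a.
Proof.
case: mI => h1 _ h3.
have := h1 a (fun _ => 0) (@cst_continuous _ _ 0).
by rewrite h3 addr0.
Qed.

Lemma idem_le f g : continuous f -> continuous g -> (forall x, f x <= g x) -> m f <= m g.
Proof.
case: mI => _ h2 _ cf cg fg.
have -> : g = (fun x => Num.max (f x) (g x)).
  by apply: funext => x; rewrite max_r.
by rewrite h2 // le_max lexx ?orbT.
Qed.

Lemma idem_bound (f : X -> R) (c e : R) : continuous f -> (forall x, `|f x - c| <= e) ->
  c - e <= m f <= c + e.
Proof.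
move=> cf h; apply/andP; split.
  rewrite -[c - e]idem_cst; apply: idem_le => // [|x]; first exact: cst_continuous.
  by have := h x; rewrite ler_norml => /andP[h1 h2]; lra.
rewrite -[c + e]idem_cst; apply: idem_le => // [|x]; first exact: cst_continuous.
by have := h x; rewrite ler_norml => /andP[h1 h2]; lra.
Qed.

End Gen.
Arguments idem_cst {R X m} mI a.
Arguments bm_le {R} F n c.
Arguments bm_ub {R} F n j.
Arguments idem_le {R X m} mI f g.
Arguments idem_bound {R X m} mI f c e.
Section Met.
Variables (R : realType) (X : metricType R).
Hypothesis Xcpt : compact [set: X].

Lemma ball_mdist (x : X) (r : R) : 0 < r -> \forall y \near x, mdist x y < r.
Proof.
move=> r0; apply/nbhs_ballP; exists r => // z; by rewrite ballEmdist.
Qed.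

Lemma unif_cont (f : X -> R) : continuous f -> forall e : R, 0 < e ->
  exists2 d : R, 0 < d & forall x y, mdist x y < d -> `|f x - f y| < e.
Proof.
move=> cf e e0.
have cov : \forall d \near (0:R)^'+, [set: X] `<=`
    (fun x => forall y, mdist x y < d -> `|f x - f y| < e).
  apply: ((compact_near_coveringP _).1 Xcpt R (0:R)^'+
    (fun d x => forall y, mdist x y < d -> `|f x - f y| < e)) => x _.
  have e20 : 0 < e / 2 by rewrite divr_gt0.
  have := cf x; move/cvgrPdist_lt => /(_ _ e20) /nbhs_ballP [r /= r0 Hr].
  have r20 : 0 < r / 2 by rewrite divr_gt0.
  near=> x' d => y hy.
  have h1 : mdist x x' < r / 2 by near: x'; exact: ball_mdist.
  have h2 : d < r / 2 by near: d; exact: nbhs_right_lt.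
  have h3 : mdist x y < r.
    apply: (le_lt_trans (metric_triangle x x' y)); rewrite [r]splitr.
    by apply: ltrD => //; exact: lt_trans hy h2.
  have k1 : `|f x - f x'| < e / 2 by apply: Hr; rewrite ballEmdist /=; lra.
  have k2 : `|f x - f y| < e / 2 by apply: Hr; rewrite ballEmdist.
  have := ler_normB (f x' - f x) (f y - f x).
  rewrite distrC in k1; rewrite distrC in k2.
  have -> : f x' - f x - (f y - f x) = f x' - f y by lra.
  move=> k3; lra.
have [d [Hd d0]] := filter_ex (filterI cov (@nbhs_right_gt R 0)).
by exists d => // x y; apply: Hd.
Unshelve. all: by end_near.
Qed.

Lemma bounded_fun (h : X -> R) :
  (forall x, exists2 r : R, 0 < r & exists c : R, forall y, mdist x y < r -> h y <= c) ->
  exists M : R, forall x, h x <= M.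
Proof.
move=> hloc.
have cov : \forall M \near +oo, [set: X] `<=` (fun x => h x < M).
  apply: ((compact_near_coveringP _).1 Xcpt R (+oo : set_system R)
    (fun M x => h x < M)) => x _; have [r r0 [c Hc]] := hloc x.
  near=> x' M.
  have h1 : mdist x x' < r by near: x'; exact: ball_mdist.
  have h2 : c < M by near: M; apply: nbhs_pinfty_gt; exact: num_real.
  by apply: (le_lt_trans (Hc _ h1)).
have [M HM] := filter_ex cov.
by exists M => x; apply/ltW/HM.
Unshelve. all: by end_near.
Qed.

Lemma diam_bound (x0 : X) : exists2 D : R, 0 < D & forall x y : X, mdist x y <= D.
Proof.
have [M HM] : exists M : R, forall x, mdist x0 x <= M.
  apply: bounded_fun => x; exists 1 => //; exists (mdist x0 x + 1) => y hy.
  have := metric_triangle x0 x y; lra.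
have M0 : 0 <= M by apply: le_trans (HM x0); exact: mdist_ge0.
exists (M + M + 1); first lra.
move=> x y; have := metric_triangle x x0 y; rewrite (metric_sym x x0).
have := HM x; have := HM y; lra.
Qed.

Lemma cont_bound (f : X -> R) : continuous f -> exists M : R, forall x, f x <= M.
Proof.
move=> cf; apply: bounded_fun => x.
have := cf x; move/cvgrPdist_lt => /(_ _ ltr01) /nbhs_ballP [r /= r0 Hr].
exists r => //; exists (f x + 1) => y hy.
have := Hr y; rewrite ballEmdist => /(_ hy).
rewrite ltr_norml => /andP[a b]; lra.
Qed.

Lemma lip_cont (g : X -> X) (gamma : R) : 0 < gamma -> gamma < 1 ->
  (forall x y, mdist (g x) (g y) <= gamma * mdist x y) -> continuous g.
Proof.
move=> g0 g1 hg x; apply/metricType_numDomainType.cvgrPdist_lt => e e0.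
near=> t.
have h1 : mdist x t < e by near: t; exact: ball_mdist.
apply: le_lt_trans (hg x t) _.
have := mdist_ge0 x t => h2.
apply: (le_lt_trans (y := mdist x t)) => //.
by rewrite ler_piMl // ltW.
Unshelve. all: by end_near.
Qed.

End Met.

Section Main.
Variables (R : realType) (X : metricType R).
Hypothesis Xcpt : compact [set: X].
Variables (gamma : R) (x0 : X) (D : R).
Hypotheses (gamma_gt0 : 0 < gamma) (gamma_lt1 : gamma < 1).
Hypothesis D_gt0 : 0 < D.
Hypothesis D_bound : forall x y : X, mdist x y <= D.
Variable phi : nat -> X -> X.
Hypothesis phi_contr : forall (j : nat) (x1 x2 : X),
      mdist (phi j x1) (phi j x2) <= gamma * mdist x1 x2.
Variable q : nat -> R.
Hypothesis q_le0 : forall j, q j <= 0.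
Hypothesis q_sup : sup [set q j | j in [set: nat]] = 0.
Variable nu : (X -> R) -> R.
Hypothesis nu_I : idem_prob nu.
Hypothesis nu_fix : eq_on_C (M_op phi q nu) nu.
Variable mu : nat -> (X -> R) -> R.
Hypothesis mu_I : forall n, idem_prob (mu n).
Hypothesis mu_fix : forall n, eq_on_C (M_op_n phi q n (mu n)) (mu n).

Definition Pm (f : X -> R) (e r : R) :=
  forall x y : X, mdist x y <= r -> `|f x - f y| <= e.

Fixpoint C (n k : nat) (f : X -> R) : R :=
  match k with
  | 0%N => f x0
  | k'.+1 => \big[Num.max/(q 0%N + C n k' (f \o phi 0%N))]_(j < n.+1)
               (q j + C n k' (f \o phi j))
  end.

Lemma cphi j : continuous (phi j).
Proof. exact: (@lip_cont R X (phi j) gamma). Qed.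

Lemma cfphi (f : X -> R) j : continuous f -> continuous (f \o phi j).
Proof. by move=> cf x; apply: continuous_comp; [exact: cphi | exact: cf]. Qed.

Lemma Pm_step (f : X -> R) (e : R) k j : Pm f e (gamma ^+ k.+1 * D) -> Pm (f \o phi j) e (gamma ^+ k * D).
Proof.
move=> h x y hxy; apply: h; apply: le_trans (phi_contr j x y) _.
by rewrite exprS -mulrA; apply: ler_wpM2l => //; exact: ltW.
Qed.

Lemma Pm_base (f : X -> R) (e : R) : Pm f e (gamma ^+ 0 * D) -> forall x, `|f x - f x0| <= e.
Proof. by move=> h x; apply: h; rewrite expr0 mul1r. Qed.

Lemma nu_has_sup (f : X -> R) : continuous f -> has_sup [set q j + nu (f \o phi j) | j in [set: nat]].
Proof.
move=> cf; split; first by exists (q 0%N + nu (f \o phi 0%N)); exists 0%N.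
have [M HM] := @cont_bound R X Xcpt f cf.
exists M => _ [j _ <-].
have : nu (f \o phi j) <= M.
  rewrite -[M](idem_cst nu_I); apply: (idem_le nu_I) => //; first exact: cfphi.
    exact: cst_continuous.
  by move=> x; apply: HM.
have := q_le0 j; lra.
Qed.

Lemma nu_ge (f : X -> R) j : continuous f -> q j + nu (f \o phi j) <= nu f.
Proof.
move=> cf; rewrite -(nu_fix f cf) /M_op.
by apply: ub_le_sup; [case: (nu_has_sup f cf)| exists j].
Qed.

Lemma nu_approx (f : X -> R) (d : R) : continuous f -> 0 < d -> exists j, nu f - d < q j + nu (f \o phi j).
Proof.
move=> cf d0; have [_ [j _ <-] hj] := sup_adherent d0 (nu_has_sup f cf).
by exists j; rewrite -(nu_fix f cf).
Qed.

Lemma CA (e : R) k : forall f : X -> R, continuous f -> Pm f e (gamma ^+ k * D) ->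
  forall n, C n k f <= nu f + e.
Proof.
elim: k => [|k IH] f cf hP n /=.
  have := idem_bound nu_I f (f x0) e cf (Pm_base f e hP).
  move=> /andP[a b]; lra.
apply: (bm_le (fun j => q j + C n k (f \o phi j))) => j hj.
have := IH (f \o phi j) (cfphi f j cf) (Pm_step f e k j hP) n.
have := nu_ge f j cf; lra.
Qed.

Lemma CB (e : R) k : forall f : X -> R, continuous f -> Pm f e (gamma ^+ k * D) ->
  forall d, 0 < d -> exists N, forall n, (N <= n)%N -> nu f - e - d <= C n k f.
Proof.
elim: k => [|k IH] f cf hP d d0.
  exists 0%N => n _ /=.
  have := idem_bound nu_I f (f x0) e cf (Pm_base f e hP).
  move=> /andP[a b]; lra.
have d20 : 0 < d / 2 by rewrite divr_gt0.
have [j hj] := nu_approx f (d/2) cf d20.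
have [N HN] := IH (f \o phi j) (cfphi f j cf) (Pm_step f e k j hP) (d / 2) d20.
exists (maxn N j) => n hn /=.
have := bm_ub (fun j => q j + C n k (f \o phi j)) n j (leq_trans (leq_maxr N j) hn).
have := HN n (leq_trans (leq_maxl N j) hn).
move=> /= a b; lra.
Qed.

Lemma CM (e : R) k : forall f : X -> R, continuous f -> Pm f e (gamma ^+ k * D) ->
  forall n, C n k f - k%:R * alpha q n - e <= mu n f <= C n k f - k%:R * alpha q n + e.
Proof.
elim: k => [|k IH] f cf hP n.
  rewrite mul0r subr0 /=.
  have := idem_bound (mu_I n) f (f x0) e cf (Pm_base f e hP).
  move=> /andP[a b]; lra.
have E : k.+1%:R * alpha q n = k%:R * alpha q n + alpha q n.
  by rewrite -addn1 natrD mulrDl mul1r.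
rewrite E.
have Hub j : (j <= n)%N -> q j - alpha q n + mu n (f \o phi j) <= mu n f.
  move=> hj; rewrite -(mu_fix n f cf) /M_op_n.
  exact: (bm_ub (fun j => q j - alpha q n + mu n (f \o phi j)) n j hj).
have Hle c : (forall j, (j <= n)%N -> q j - alpha q n + mu n (f \o phi j) <= c) -> mu n f <= c.
  move=> h; rewrite -(mu_fix n f cf) /M_op_n.
  exact: (bm_le (fun j => q j - alpha q n + mu n (f \o phi j)) _ _ h).
have Cub j : (j <= n)%N -> q j + C n k (f \o phi j) <= C n k.+1 f.
  move=> hj; exact: (bm_ub (fun j => q j + C n k (f \o phi j)) n j hj).
have Cle c : (forall j, (j <= n)%N -> q j + C n k (f \o phi j) <= c) -> C n k.+1 f <= c.
  move=> h; exact: (bm_le (fun j => q j + C n k (f \o phi j)) _ _ h).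
apply/andP; split.
  suff : C n k.+1 f <= mu n f + (k%:R * alpha q n + alpha q n) + e by lra.
  apply: Cle => j hj.
  have /andP[a _] := IH (f \o phi j) (cfphi f j cf) (Pm_step f e k j hP) n.
  have := Hub j hj; lra.
apply: Hle => j hj.
have /andP[_ a] := IH (f \o phi j) (cfphi f j cf) (Pm_step f e k j hP) n.
have := Cub j hj; lra.
Qed.

Lemma main_cvg : tau_p_cvg mu nu.
Proof.
move=> f cf; apply/cvgrPdist_le => eps eps0.
pose η := eps / 3.
have e3 : η + η + η = eps by rewrite /η; lra.
have η0 : 0 < η by rewrite /η divr_gt0.
clearbody η.
have [dl dl0 Hdl] := @unif_cont R X Xcpt f cf η η0.
have [k hk] : exists k, gamma ^+ k * D < dl.
  have g1 : `|gamma| < 1 by rewrite gtr0_norm.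
  have dD : 0 < dl / D by rewrite divr_gt0.
  have [N _ HN] := (cvgrPdist_lt _ _).1 (cvg_expr g1) _ dD.
  exists N; have := HN N (leqnn N).
  by rewrite sub0r normrN gtr0_norm ?exprn_gt0 // ltr_pdivlMr.
have hP : Pm f η (gamma ^+ k * D).
  move=> x y hxy; apply/ltW/Hdl; exact: le_lt_trans hxy hk.
have [N1 HN1] := CB η k f cf hP η η0.
have hs : has_sup [set q j | j in [set: nat]].
  split; first by exists (q 0%N); exists 0%N.
  by exists 0 => _ [j _ <-]; exact: q_le0.
have ηk : 0 < η / k.+1%:R by rewrite divr_gt0.
have [_ [j0 _ <-] hj0] := sup_adherent ηk hs.
rewrite q_sup sub0r in hj0.
exists (maxn N1 j0) => // n /= hn.
have a1 : q j0 <= alpha q n.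
  by rewrite /alpha; exact: (bm_ub q n j0 (leq_trans (leq_maxr _ _) hn)).
have a2 : alpha q n <= 0 by apply: (bm_le q n 0) => j _; exact: q_le0.
have a3 : -η <= k%:R * alpha q n.
  have h : -(η / k.+1%:R) <= alpha q n by exact: le_trans (ltW hj0) a1.
  apply: le_trans (ler_wpM2l (ler0n _ k) h).
  rewrite mulrN lerN2 mulrA ler_pdivrMr ?ltr0Sn // mulrC.
  by rewrite ler_wpM2l ?(ltW η0) // ler_nat leqnSn.
have a4 : k%:R * alpha q n <= 0 by apply: mulr_ge0_le0.
have := CA η k f cf hP n; have := HN1 n (leq_trans (leq_maxl _ _) hn).
have /andP[b1 b2] := CM η k f cf hP n.
move=> c1 c2; rewrite ler_norml; apply/andP; split; lra.
Qed.

End Main.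
Theorem theorem3p4 (R : realType) (X : metricType R)
  (Xcpt : compact [set: X]) (gamma : R)
  (gamma_gt0 : 0 < gamma) (gamma_lt1 : gamma < 1)
  (phi : nat -> X -> X)
  (phi_contr : forall (j : nat) (x1 x2 : X),
      mdist (phi j x1) (phi j x2) <= gamma * mdist x1 x2)
  (q : nat -> R) (q_le0 : forall j, q j <= 0)
  (q_sup : sup [set q j | j in [set: nat]] = 0)
  (nu : (X -> R) -> R) (nu_I : idem_prob nu)
  (nu_fix : eq_on_C (M_op phi q nu) nu)
  (mu : nat -> (X -> R) -> R) (mu_I : forall n, idem_prob (mu n))
  (mu_fix : forall n, eq_on_C (M_op_n phi q n (mu n)) (mu n)) :
  (forall (sub : nat -> nat) (m : (X -> R) -> R),
      (forall i, (sub i < sub i.+1)%N) ->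
      idem_prob m -> tau_p_cvg (fun i => mu (sub i)) m ->
      tau_p_cvg (fun i => mu (sub i)) nu)
  /\ tau_p_cvg mu nu.
Proof.
have main : tau_p_cvg mu nu.
  have [[x0 _]|nX] := pselect (exists x : X, True).
    have [D D0 HD] := @diam_bound R X Xcpt x0.
    exact: (@main_cvg R X Xcpt gamma x0 D gamma_gt0 gamma_lt1 D0 HD phi phi_contr
      q q_le0 q_sup nu nu_I nu_fix mu mu_I mu_fix).
  move=> f cf.
  have Ef : f = fun _ => 0 by apply: funext => x; case: nX; exists x.
  rewrite Ef.
  have -> : nu (fun _ => 0) = 0 by case: nu_I.
  have -> : (fun k => mu k (fun _ : X => 0)) = fun _ => 0.
    by apply: funext => k; case: (mu_I k).
  exact: cvg_cst.
split => //.
move=> sub m hsub _ _ f cf.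
have si : forall i, (i <= sub i)%N.
  by elim => // i IH; exact: leq_ltn_trans IH (hsub i).
have /cvgrPdist_le H := main f cf.
apply/cvgrPdist_le => e e0; have [N _ HN] := H e e0.
exists N => // i /= hi; apply: HN => /=; exact: leq_trans hi (si i).
Qed.
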